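(* Let $H$ be a capacitated hypergraph with $n$ vertices, let $\alpha\ge0$, and let $H'$ be an $\alpha$-contraction of $H$ (with respect to some MA-ordering). Then $\text{sum-deg}(H')\le 2\alpha n$.
   Context: A hypergraph $H=(V,E)$ has finite vertex set $V$, a finite multiset $E$ of edges (subsets of $V$) and capacities $c:E\to\mathbb{R}_{\ge0}$; $\text{sum-deg}(H)=\sum_{e\in E}|e|c(e)$. For subsets $A_1,\ldots,A_k$, $d(A_1,\ldots,A_k)$ is the total capacity of edges meeting every $A_i$ (a vertex $v$ stands for $\{v\}$). For an ordering $v_1,\ldots,v_n$, $V_i=\{v_1,\ldots,v_i\}$; it is an MA-ordering if $d(V_{i-1},v_i)\ge d(V_{i-1},v_j)$ for all $1\le i<j\le n$. Given an MA-ordering and $\alpha\ge0$, a set of consecutive vertices $v_a,\ldots,v_b$ ($a\le b$) is $\alpha$-tight if $d(V_i,v_{i+1})\ge\alpha$ for all $a\le i<b$. The maximal $\alpha$-tight sets partition $V$; the $\alpha$-contraction contracts each maximal $\alpha$-tight set into a single vertex and discards edges that become singletons, keeping capacities. *)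

(* Defs.v *)
From HB Require Import structures.
From mathcomp Require Import all_boot all_order all_algebra.
Set Implicit Arguments. Unset Strict Implicit. Unset Printing Implicit Defensive.
Import Order.TTheory GRing.Theory Num.Theory.
Local Open Scope ring_scope.

(* A capacitated hypergraph on the finite vertex type V is given by a finite
   index type E of edges (so E encodes a finite multiset of edges),
   edge : E -> {set V} and capacities c : E -> R. *)

Section Hyp.
Variables (R : realFieldType) (V E : finType).
Variables (edge : E -> {set V}) (c : E -> R).

Definition dcap (As : seq {set V}) : R :=
  \sum_(e | all (fun A => edge e :&: A != set0) As) c e.

Definition sum_deg (T : finType) (P : pred E) (edg : E -> {set T}) : R :=
  \sum_(e | P e) #|edg e|%:R * c e.

(* An ordering v_1,...,v_n of V is a bijection ord : 'I_n -> V, with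
   0-based positions: ord k is v_{k+1}. *)
Variables (n : nat) (ord : 'I_n -> V).

Definition prefix (i : nat) : {set V} := [set ord k | k : 'I_n & (k < i)%N].

(* d(V_i, v_{i+1}) in the paper's 1-based notation, where v_{i+1} = ord i. *)
Definition dnext (i : 'I_n) : R := dcap [:: prefix i; [set ord i]].

Definition is_MA_ordering : Prop :=
  forall i j : 'I_n, (i < j)%N ->
    dcap [:: prefix i; [set ord j]] <= dcap [:: prefix i; [set ord i]].

Variable alpha : R.

(* {v_a,...,v_b} (a <= b) is alpha-tight if d(V_i, v_{i+1}) >= alpha for
   a <= i < b (1-based); with 0-based positions a', b' this says
   alpha <= dnext i for a' < i <= b'. *)
Definition tight (S : {set V}) : bool :=
  [exists a : 'I_n, exists b : 'I_n,
     [&& (a <= b)%N,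
         S == [set ord k | k : 'I_n & (a <= k <= b)%N] &
         [forall i : 'I_n, ((a < i <= b)%N) ==> (alpha <= dnext i)]]].

Definition maximal_tight (S : {set V}) : bool :=
  tight S && [forall T : {set V}, (tight T && (S \subset T)) ==> (T == S)].

Definition contr_vertices : {set {set V}} := [set S | maximal_tight S].

Definition contr_edge (e : E) : {set {set V}} :=
  [set B in contr_vertices | B :&: edge e != set0].

Definition contr_kept (e : E) : bool := (1 < #|contr_edge e|)%N.

Definition contr_sum_deg : R := sum_deg contr_kept contr_edge.

End Hyp.

(* Main.v *)
Require Import Defs.
From HB Require Import structures.
From mathcomp Require Import all_boot all_order all_algebra.
From mathcomp Require Import zify.
Import Order.TTheory GRing.Theory Num.Theory.
Local Open Scope ring_scope.

Theorem mainTheorem18 (R : realFieldType) (V E : finType)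
    (edge : E -> {set V}) (c : E -> R) (n : nat) (ord : 'I_n -> V)
    (alpha : R) :
  (forall e, 0 <= c e) ->
  bijective ord ->
  is_MA_ordering edge c ord ->
  0 <= alpha ->
  contr_sum_deg edge c ord alpha <= 2 * alpha * n%:R.
Proof.
move=> c0 bij MA a0.
have inj : injective ord := bij_inj bij.
pose I (a b : nat) := [set ord k | k : 'I_n & (a <= k <= b)%N].
have memI : forall a b j, (ord j \in I a b) = (a <= j <= b)%N.
  by move=> a b j; rewrite mem_imset // inE.
pose dn := dnext edge c ord.
have tightP : forall S, tight edge c ord alpha S -> exists a b : 'I_n,
   [/\ (a <= b)%N, S = I a b & forall i : 'I_n, (a < i <= b)%N -> alpha <= dn i].
  move=> S /existsP [a /existsP [b /and3P [ab /eqP SE /forallP H]]].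
  exists a, b; split=> // i hi; exact: (implyP (H i) hi).
have tightI : forall a b : 'I_n, (a <= b)%N ->
   (forall i : 'I_n, (a < i <= b)%N -> alpha <= dn i) -> tight edge c ord alpha (I a b).
  move=> a b ab H; apply/existsP; exists a; apply/existsP; exists b.
  rewrite ab eqxx /=; apply/forallP => i; apply/implyP; exact: H.
have maxP : forall S, maximal_tight edge c ord alpha S -> forall T,
   tight edge c ord alpha T -> S \subset T -> T = S.
  move=> S /andP [_ /forallP H] T tT sST; apply/eqP.
  by have := H T; rewrite tT sST.
have disj : forall B1 B2 j, maximal_tight edge c ord alpha B1 ->
   maximal_tight edge c ord alpha B2 -> ord j \in B1 -> ord j \in B2 -> B1 = B2.
  move=> B1 B2 j m1 m2.
  have [a1 [b1 [ab1 E1 H1]]] := tightP _ (andP m1).1.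
  have [a2 [b2 [ab2 E2 H2]]] := tightP _ (andP m2).1.
  move=> j1 j2; rewrite E1 memI in j1; rewrite E2 memI in j2.
  pose am := if (a1 <= a2)%N then a1 else a2.
  pose bm := if (b1 <= b2)%N then b2 else b1.
  have hT : tight edge c ord alpha (I am bm).
    apply: tightI; first by rewrite /am /bm; case: ifP; case: ifP; lia.
    move=> i hi; have [hi1|hi1] := boolP (a1 < i <= b1)%N; first exact: H1.
    apply: H2; move: hi hi1; rewrite /am /bm; case: ifP; case: ifP; lia.
  have s1 : B1 \subset I am bm.
    rewrite E1; apply/subsetP => x /imsetP [k]; rewrite inE => hk ->.
    by rewrite memI /am /bm; case: ifP; case: ifP; lia.
  have s2 : B2 \subset I am bm.
    rewrite E2; apply/subsetP => x /imsetP [k]; rewrite inE => hk ->.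
    by rewrite memI /am /bm; case: ifP; case: ifP; lia.
  by rewrite -(maxP _ m1 _ hT s1); exact: maxP.
pose brk (i : 'I_n) := (i == 0 :> nat) || (dn i < alpha).
have startP : forall B, maximal_tight edge c ord alpha B -> exists a b : 'I_n,
   [/\ (a <= b)%N, B = I a b, (forall i : 'I_n, (a < i <= b)%N -> alpha <= dn i)
     & brk a].
  move=> B mB; have [a [b [ab EB H]]] := tightP _ (andP mB).1.
  exists a, b; split=> //; apply/negPn/negP; rewrite negb_or => /andP [a0n].
  rewrite -leNgt => ha.
  have a'lt : (a.-1 < n)%N by have := ltn_ord a; lia.
  pose a' := Ordinal a'lt.
  have hT : tight edge c ord alpha (I a' b).
    apply: tightI => /=; first lia.
    move=> i hi; have [->|ne] := eqVneq i a; first exact: ha.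
    apply: H; move: hi ne; rewrite /= -val_eqE /=; lia.
  have sBT : B \subset I a' b.
    rewrite EB; apply/subsetP => x /imsetP [k]; rewrite inE => hk ->.
    by rewrite memI /=; lia.
  have := maxP _ mB _ hT sBT; rewrite EB => E'.
  have : ord a' \in I a' b by rewrite memI /= leqnn; lia.
  by rewrite E' memI /=; lia.
pose st (j : 'I_n) := (\max_(i : 'I_n | (i <= j)%N && brk i) i)%N.
have stP : forall j : 'I_n, exists2 s : 'I_n, (s : nat) = st j & (s <= j)%N && brk s.
  move=> j; have zlt : (0 < n)%N by have := ltn_ord j; lia.
  have [|s hs Es] := @eq_bigmax_cond _ [pred i : 'I_n | (i <= j)%N && brk i]
      (fun i => nat_of_ord i).
    apply/card_gt0P; exists (Ordinal zlt); by rewrite inE /= /brk /=.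
  by exists s; [symmetry; exact: Es | exact: hs].
have stmax : forall j i : 'I_n, (i <= j)%N -> brk i -> (i <= st j)%N.
  move=> j i ij bi; apply: (@leq_bigmax_cond _ _ (fun i : 'I_n => nat_of_ord i)).
  by rewrite ij.
have stI : forall a b j : 'I_n, brk a ->
   (forall i : 'I_n, (a < i <= b)%N -> alpha <= dn i) -> (a <= j <= b)%N -> st j = a.
  move=> a b j ba H hj; apply/eqP; rewrite eqn_leq stmax ?andbT; last by [];
    last by lia.
  have [s sE /andP [sj bs]] := stP j; rewrite -sE leqNgt; apply/negP => as_.
  have := H s; rewrite as_ /=; move: bs; rewrite /brk.
  have -> : (s == 0 :> nat) = false by lia.
  move=> /= lt /(_ (leq_trans sj (andP hj).2)) hle.
  by have := lt_le_trans lt hle; rewrite ltxx.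
have bound : forall j : 'I_n,
   dcap edge c [:: Defs.prefix ord (st j); [set ord j]] <= alpha.
  move=> j; have [s sE /andP [sj bs]] := stP j; rewrite -sE.
  move: bs; rewrite /brk; case: eqP => [s0 _|_ /= lt].
    rewrite s0 /dcap big_pred0 // => e /=.
    have -> : Defs.prefix ord 0 = set0.
      by apply/setP => x; rewrite inE; apply/imsetP => [[k]]; rewrite inE ltn0.
    by rewrite setI0 eqxx.
  apply: le_trans (ltW lt); rewrite /dn /dnext.
  move: sj; rewrite leq_eqVlt => /orP [/eqP/val_inj ->|sj] //.
  exact: MA.
pose P (e : E) (j : 'I_n) :=
  all (fun A => edge e :&: A != set0) [:: Defs.prefix ord (st j); [set ord j]].
pose N (e : E) := #|[set j | P e j]|.
have sumN : \sum_(j < n) dcap edge c [:: Defs.prefix ord (st j); [set ord j]]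
    = \sum_e (N e)%:R * c e.
  transitivity (\sum_(j < n) \sum_e (if P e j then c e else 0)).
    by apply: eq_bigr => j _; rewrite /dcap big_mkcond.
  rewrite exchange_big; apply: eq_bigr => e _.
  rewrite -big_mkcond (eq_bigl (fun j => j \in [set j | P e j])); last first.
    by move=> j; rewrite inE.
  by rewrite sumr_const mulr_natl.
have hP : forall B j, B \in contr_vertices edge c ord alpha -> ord j \in B ->
    odflt set0 [pick B' in contr_vertices edge c ord alpha | ord j \in B'] = B.
  move=> B j hB hj; case: pickP => [B' /andP [hB' hj'] | /(_ B)] /=.
    rewrite inE in hB; move: hB'; rewrite inE => hB'; exact: (disj B' B j hB' hB hj' hj).
  by rewrite hB hj.
have perEdge : forall e, contr_kept edge c ord alpha e ->
    (#|contr_edge edge c ord alpha e| <= (N e).+1)%N.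
  move=> e ke.
  have : (0 < #|contr_edge edge c ord alpha e|)%N by rewrite /contr_kept in ke; lia.
  case/card_gt0P => B0; rewrite inE => /andP [_ /set0Pn [x]].
  rewrite inE => /andP [_ xe].
  case: bij => g gK Kg.
  have hx : ord (g x) \in edge e by rewrite Kg.
  case: (@arg_minnP _ (g x) (fun j : 'I_n => ord j \in edge e) (fun j : 'I_n => nat_of_ord j) hx) => jm hjm minj.
  pose h j := odflt set0 [pick B' in contr_vertices edge c ord alpha | ord j \in B'].
  pose D := jm |: [set j | P e j].
  apply: (@leq_trans #|h @: D|); last first.
    apply: leq_trans (leq_imset_card _ _) _.
    by rewrite cardsU1 /N; case: (_ \notin _).
  apply: subset_leq_card; apply/subsetP => B hB; move: (hB); rewrite inE => /andP [hBv /set0Pn [y]].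
  rewrite inE => /andP [yB ye].
  have mB : maximal_tight edge c ord alpha B by rewrite inE in hBv.
  have [a [b [ab EB H ba]]] := startP B mB.
  have [jmB|jmB] := boolP (ord jm \in B).
    by apply/imsetP; exists jm; [rewrite setU11 | rewrite /h (hP B jm)].
  move: yB; rewrite EB => /imsetP [j]; rewrite inE => hj yE.
  rewrite yE in ye.
  apply/imsetP; exists j; last by rewrite /h (hP B j) // EB memI.
  rewrite in_setU1 inE; apply/orP; right.
  rewrite /P /= (stI a b j ba H hj) andbT; apply/andP; split.
    apply/set0Pn; exists (ord jm); rewrite inE hjm /=.
    apply/imsetP; exists jm => //; rewrite inE.
    have := minj j ye; move: jmB; rewrite EB memI; lia.
  by apply/set0Pn; exists (ord j); rewrite inE ye set11.
rewrite /contr_sum_deg /sum_deg.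
apply: (@le_trans _ _ (\sum_(e | contr_kept edge c ord alpha e) (2 * (N e)%:R * c e))).
  apply: ler_sum => e ke; rewrite ler_wpM2r // -natrM ler_nat.
  have := perEdge e ke; rewrite /contr_kept in ke; lia.
apply: (@le_trans _ _ (\sum_e (2 * (N e)%:R * c e))).
  rewrite [X in _ <= X](bigID (contr_kept edge c ord alpha)) /= lerDl.
  by apply: sumr_ge0 => e _; rewrite mulr_ge0 // mulr_ge0.
rewrite (eq_bigr (fun e => 2 * ((N e)%:R * c e))); last by move=> e _; rewrite mulrA.
rewrite -mulr_sumr -sumN -mulrA ler_wpM2l //.
apply: le_trans (ler_sum _ (fun j _ => bound j)) _.
by rewrite sumr_const card_ord mulr_natr.
Qed.
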